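(* Let $r\in\mathbb{N}$, $w,v\in\mathbb{YF}^r$ and $l\in\mathbb{N}_0$ with $h(w,v)\ge l$. Then $$d_r(w,v,l)=d_1(s(w),s(v),l)\cdot r^{\#v-\#w-e(v[l])}.$$
   Context: Fix $r\in\mathbb{N}$. Words and statistics. Consider finite words over $\{1_1,\dots,1_r,2\}$. A letter $1_i$ is a one with digit value $1$; $2$ is a two with digit value $2$. $|x|$ is the sum of digit values, $\#x$ the number of letters, $e(x)$ the number of ones. The graph $\mathbb{YF}^r$. It is the graded graph on all finite words, graded by $|\cdot|$. From $x$ there is a downward edge to every word obtained by one of two operations: (i) delete the leftmost one; (ii) replace a $2$ lying left of the leftmost one (any $2$ if there are no ones) by $1_i$, with arbitrary $i$. For $r=1$ write $1$ for $1_1$; $\mathbb{YF}=\mathbb{YF}^1$. The map $s$ replaces every $1_i$ by $1$. Suffix notation. $h(w,v)$ is the number of letters of the longest common suffix of $w$ and $v$; $1_i\ne 1_j$ for $i\ne j$. $x[l]$ is $x$ with its last $l$ letters deleted. The restricted path count $d_r(x,y,l)$. For $x,y\in\mathbb{YF}^r$ with $h(x,y)\ge l$, let $u$ be their common suffix of $l$ letters, so $x=x'u$ and $y=y'u$. Then $d_r(x,y,l)$ is the number of downward paths in $\mathbb{YF}^r$ of the form $y=y_nu\to y_{n-1}u\to\dots\to y_mu=x$ with $|y_i|=i$ such that the words $y_i$ ($m\le i\le n$) do not all end with one and the same letter. $d_1(\cdot,\cdot,l)$ is the analogous count in $\mathbb{YF}$. *)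

(* Defs.v *)
From mathcomp Require Import all_boot all_order all_algebra.
Set Implicit Arguments. Unset Strict Implicit. Unset Printing Implicit Defensive.

(* Letters of YF^r: [Some i] is the one 1_{i+1} (0 <= i < r), [None] is the two 2. *)
Definition letter := option nat.
Definition word := seq letter.
Definition two : letter := None.
Definition oneL (i : nat) : letter := Some i.

Definition is_one (a : letter) : bool := if a is Some _ then true else false.
Definition digit (a : letter) : nat := if a is Some _ then 1 else 2.

Definition weight (x : word) : nat := sumn (map digit x).
Definition nletters (x : word) : nat := size x.
Definition e (x : word) : nat := count is_one x.

(* x is a vertex of YF^r : every one has index < r *)
Definition wordr (r : nat) (x : word) : bool :=
  all (fun a => if a is Some i then i < r else true) x.

Definition s (x : word) : word := map (fun a => if a is Some _ then oneL 0 else two) x.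

(* downward neighbours of x in YF^r:
   (i) delete the leftmost one;
   (ii) replace a 2 lying left of the leftmost oneL (any 2 if no ones) by 1_i. *)
Definition down (r : nat) (x : word) : seq word :=
  let j0 := find is_one x in
  (if j0 < size x then [:: take j0 x ++ drop j0.+1 x] else [::]) ++
  [seq set_nth two x j (oneL i)
     | j <- [seq j <- iota 0 j0 | nth two x j == two], i <- iota 0 r].

Definition edge (r : nat) (x y : word) : bool := y \in down r x.

Fixpoint lcp (a b : word) : nat :=
  match a, b with
  | x :: a', y :: b' => if x == y then (lcp a' b').+1 else 0
  | _, _ => 0
  end.
Definition h (w v : word) : nat := lcp (rev w) (rev v).

Definition cut (x : word) (l : nat) : word := take (size x - l) x.

Definition nexts (r : nat) (u z : word) : seq word :=
  [seq take (size y - size u) y | y <- down r (z ++ u) & drop (size y - size u) y == u].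

Fixpoint pathsk (r : nat) (u : word) (k : nat) (z : word) : seq (seq word) :=
  match k with
  | 0 => [:: [:: z]]
  | k'.+1 => [seq z :: p | z' <- nexts r u z, p <- pathsk r u k' z']
  end.

Definition ends_with (a : letter) (w : word) : bool := (w != [::]) && (last two w == a).

Definition same_end (p : seq word) : bool :=
  if p is z :: _ then (z != [::]) && all (ends_with (last two z)) p else true.

(* d_r(x,y,l): number of downward paths y'u -> ... -> x'u in YF^r, u the common
   suffix of l letters, such that the y_i do not all end with the same letter. *)
Definition d (r : nat) (x y : word) (l : nat) : nat :=
  let u := drop (size y - l) y in
  let x' := cut x l in
  let y' := cut y l in
  size (undup [seq p <- pathsk r u (weight y' - weight x') y'
               | (last y' p == x') && ~~ same_end p]).

(* Main.v *)
Require Import Defs.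
From mathcomp Require Import all_boot all_order all_algebra.
Import GRing.Theory Num.Theory.
Set Implicit Arguments. Unset Strict Implicit. Unset Printing Implicit Defensive.

Definition del (z : word) : word :=
  take (find is_one z) z ++ drop (find is_one z).+1 z.
Definition J (z : word) : seq nat :=
  [seq j <- iota 0 (find is_one z) | nth two z j == two].

Lemma down_eq r z : down r z = (if has is_one z then [:: del z] else [::]) ++
  [seq set_nth two z j (oneL i) | j <- J z, i <- iota 0 r].
Proof. by rewrite /down -has_find. Qed.

Lemma downP r z y : y \in down r z <->
  ((has is_one z /\ y = del z) \/ exists j i, [/\ j < find is_one z, nth two z j = two, i < r & y = set_nth two z j (oneL i)]).
Proof.
rewrite down_eq mem_cat; split.
  case/orP.
    by case: ifP => // hz; rewrite inE => /eqP ->; left.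
  move/allpairsPdep => [j [i [hj hi ->]]]; right; exists j, i.
  move: hj; rewrite mem_filter mem_iota => /andP[/eqP hn /andP[_ hj]].
  by move: hi; rewrite mem_iota => /andP[_ hi].
case=> [[hz ->]|[j [i [hj hn hi ->]]]].
  by rewrite hz inE eqxx.
apply/orP; right; apply/allpairsPdep; exists j, i; split=> //.
  by rewrite mem_filter mem_iota hn eqxx.
by rewrite mem_iota.
Qed.

Lemma set_nth_catl (B u : word) j a : j < size B ->
  set_nth two (B ++ u) j a = set_nth two B j a ++ u.
Proof.
elim: B j => [|b B IH] [|j] //= hj; by rewrite ?IH.
Qed.

Lemma set_nth_catr (B u : word) j a :
  set_nth two (B ++ u) (size B + j) a = B ++ set_nth two u j a.
Proof. by elim: B => [|b B IH] //=; rewrite IH. Qed.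

Lemma take_catD (B u : word) n : take (size B + n) (B ++ u) = B ++ take n u.
Proof. by elim: B => [|b B IH] //=; rewrite IH. Qed.

Lemma drop_catD (B u : word) n : drop (size B + n) (B ++ u) = drop n u.
Proof. by elim: B => [|b B IH] //=. Qed.

Lemma drop_catl (B u : word) n : n <= size B -> drop n (B ++ u) = drop n B ++ u.
Proof.
elim: B n => [|b B IH] [|n] //= h; [by rewrite drop0 | exact: IH].
Qed.

Lemma take_catl (B u : word) n : n <= size B -> take n (B ++ u) = take n B.
Proof.
elim: B n => [|b B IH] [|n] //= h; [by rewrite take0 | by rewrite IH].
Qed.

Lemma down_cat r B u y : y \in down r (B ++ u) ->
  (exists2 B', B' \in down r B & y = B' ++ u) \/
  (~~ has is_one B /\ ((has is_one u /\ y = B ++ del u) \/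
     exists j i, [/\ j < find is_one u, nth two u j = two, i < r & y = B ++ set_nth two u j (oneL i)])).
Proof.
move/downP=> [[hz ->]|[j [i [hj hn hi ->]]]]; rewrite /del ?find_cat;
  case hB: (has is_one B).
- left; exists (del B); first by apply/downP; left.
  have hf : find is_one B < size B by rewrite -has_find.
  by rewrite /del take_catl ?drop_catl ?catA // ltnW.
- right; split; first by rewrite ?hB.
  left; split; first by move: hz; rewrite has_cat hB.
  by rewrite take_catD -addnS drop_catD catA.
- move: hj; rewrite find_cat hB => hj.
  have hf : find is_one B < size B by rewrite -has_find.
  left; exists (set_nth two B j (oneL i)).
    apply/downP; right; exists j, i; split=> //.
    by move: hn; rewrite nth_cat (ltn_trans hj hf).
  by rewrite set_nth_catl // (ltn_trans hj hf).
- move: hj; rewrite find_cat hB => hj.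
  have hf : find is_one B = size B by rewrite hasNfind ?hB.
  case: (ltnP j (size B)) => hjB.
    left; exists (set_nth two B j (oneL i)).
      apply/downP; right; exists j, i; split=> //; first by rewrite hf.
      by move: hn; rewrite nth_cat hjB.
    by rewrite set_nth_catl.
  right; split; first by rewrite ?hB.
  right; exists (j - size B), i; split=> //.
  + by rewrite ltn_subLR.
  + by move: hn; rewrite nth_cat ltnNge hjB.
  + by rewrite -set_nth_catr subnKC.
Qed.

From mathcomp Require Import zify.

Lemma catIs_w (a b u : word) : a ++ u = b ++ u -> a = b.
Proof.
move=> e; have hs : size a = size b.
  by have := congr1 size e; rewrite !size_cat => /addIn.
by move/eqP: e; rewrite eqseq_cat // => /andP[/eqP].
Qed.

Lemma down_catr r B u B' : B' \in down r B -> B' ++ u \in down r (B ++ u).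
Proof.
move/downP=> [[hB ->]|[j [i [hj hn hi ->]]]]; apply/downP.
  left; split; first by rewrite has_cat hB.
  have hf : find is_one B < size B by rewrite -has_find.
  by rewrite /del find_cat hB take_catl ?drop_catl ?catA // ltnW.
have hjB : j < size B by apply: leq_trans hj (find_size _ _).
right; exists j, i; split=> //.
- rewrite find_cat; case: ifP => // _; apply: leq_trans hj _.
  by rewrite (leq_trans (find_size _ _)) // leq_addr.
- by rewrite nth_cat hjB.
- by rewrite set_nth_catl.
Qed.

Lemma size_del z : has is_one z -> size (del z) = (size z).-1.
Proof.
rewrite has_find => hf; rewrite /del size_cat size_take size_drop hf; lia.
Qed.

Lemma down_catU r B u B' : (B' ++ u \in down r (B ++ u)) = (B' \in down r B).
Proof.
apply/idP/idP; last exact: down_catr.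
move/down_cat => [[B'' hB'' e]|[hB [[hu e]|[j [i [hj hn hi e]]]]]].
- by rewrite (catIs_w e).
- exfalso.
  have hf : find is_one u < size u by rewrite -has_find.
  have hs := congr1 size e; rewrite !size_cat size_take size_drop hf in hs.
  change (size B' + size u = size B + (find is_one u + (size u - (find is_one u).+1))) in hs.
  have h1 : find is_one (B' ++ u) <= size B' + find is_one u.
    rewrite find_cat; case: ifP => [hB'|_]; last by [].
    rewrite has_find in hB'; lia.
  have h2 : size B + find is_one u <= find is_one (B ++ del u).
    rewrite find_cat (negbTE hB) leq_add2l /del find_cat has_take // ltnn.
    by rewrite size_take hf leq_addr.
  rewrite e in h1; lia.
- exfalso.
  have hju : j < size u by apply: leq_trans hj (find_size _ _).
  have hsz : size (set_nth two u j (oneL i)) = size u.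
    by rewrite size_set_nth; apply/maxn_idPr.
  have hs := congr1 size e; rewrite !size_cat hsz in hs.
  move/eqP: e; rewrite eqseq_cat; last exact: (addIn hs).
  case/andP=> _ /eqP /(congr1 (fun s => nth two s j)).
  by rewrite nth_set_nth /= eqxx hn.
Qed.

Lemma nexts_mem r u z : nexts r u z =i down r z.
Proof.
move=> z'; rewrite /nexts; apply/mapP/idP.
  move=> [y]; rewrite mem_filter => /andP[/eqP hd hy] ->.
  have ey : y = take (size y - size u) y ++ u by rewrite -{1}(cat_take_drop (size y - size u) y) hd.
  by rewrite ey down_catU in hy.
move=> h; exists (z' ++ u).
  by rewrite mem_filter down_catU h andbT size_cat addnK drop_size_cat.
by rewrite size_cat addnK take_size_cat.
Qed.

Lemma nexts_nil r z : nexts r [::] z = down r z.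
Proof.
rewrite /nexts cats0; elim: (down r z) => //= y s IH.
by rewrite {1}subn0 drop_size eqxx /= subn0 take_size IH.
Qed.

Definition paths r k z := pathsk r [::] k z.

Lemma pathsk_mem r u k z : pathsk r u k z =i paths r k z.
Proof.
rewrite /paths; elim: k z => [|k IH] z //=.
apply: mem_allpairs_dep => [x | x _]; first by rewrite nexts_mem nexts_nil.
exact: IH.
Qed.

Lemma paths_S r k z : paths r k.+1 z = [seq z :: p | z' <- down r z, p <- paths r k z'].
Proof. by rewrite /paths /= nexts_nil. Qed.

Lemma paths_head r k z p : p \in paths r k z -> exists p', p = z :: p'.
Proof.
case: k => [|k]; first by rewrite /paths /= inE => /eqP ->; exists [::].
by rewrite paths_S => /allpairsPdep [z' [p' [_ _ ->]]]; exists p'.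
Qed.

Lemma down_uniq r z : uniq (down r z).
Proof.
rewrite down_eq cat_uniq; apply/and3P; split.
- by case: ifP.
- case: ifP => hz /=; last by apply/hasPn.
  apply/hasPn => y /allpairsPdep [j [i [hj hi ->]]].
  rewrite inE; apply/negP => /eqP e.
  move: hj; rewrite mem_filter mem_iota => /andP[_ /andP[_ hj]].
  have hjz : j < size z by apply: leq_trans hj (find_size _ _).
  have := congr1 size e; rewrite size_del // size_set_nth.
  have : 0 < size z by lia.
  move/maxn_idPr: hjz => -> hz0 hh.
  change (size z = (size z).-1) in hh; lia.
- apply: (allpairs_uniq (f := fun (j i : nat) => set_nth two z j (oneL i))); first by rewrite filter_uniq // iota_uniq.
    exact: iota_uniq.
  move=> [j i] [j' i'] /allpairsPdep [x [y [hx _ [-> ->]]]].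
  move=> /allpairsPdep [x' [y' [hx' _ [-> ->]]]] /= e.
  move: hx hx'; rewrite !mem_filter => /andP[/eqP hn _] /andP[/eqP hn' _].
  have := congr1 (fun s => nth two s x) e; rewrite !nth_set_nth /= eqxx.
  case: eqP => [<- [->] //|_]; by rewrite hn.
Qed.

Lemma uniq_conspaths (z : word) (s : seq word) (t : word -> seq (seq word)) :
  uniq s -> (forall y, y \in s -> uniq (t y)) ->
  (forall y p, y \in s -> p \in t y -> head [::] p = y) ->
  uniq [seq z :: p | y <- s, p <- t y].
Proof.
elim: s => //= y s IH /andP[hy hs] ht hh.
rewrite cat_uniq map_inj_uniq; last by move=> a b [].
rewrite ht ?inE ?eqxx //= IH //; last first.
- by move=> y' p hy'; apply: hh; rewrite inE hy' orbT.
- by move=> y' hy'; apply: ht; rewrite inE hy' orbT.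
rewrite andbT; apply/hasPn => q /allpairsPdep [y' [p [hy' hp ->]]].
apply/negP => /mapP [p' hp' [e]].
have h1 := hh y p' (mem_head _ _) hp'.
have h2 := hh y' p; rewrite inE hy' orbT in h2; have h3 := h2 isT hp.
by move: hy; rewrite -h1 -e h3 hy'.
Qed.

Lemma paths_uniq r k z : uniq (paths r k z).
Proof.
elim: k z => [|k IH] z //; rewrite paths_S; apply: uniq_conspaths => //.
  exact: down_uniq.
by move=> y p _ /paths_head [p' ->].
Qed.

Lemma count_paths_S r k z (F : pred (seq word)) :
  count F (paths r k.+1 z) = \sum_(y <- down r z) count (fun p => F (z :: p)) (paths r k y).
Proof.
rewrite paths_S count_flatten -map_comp sumnE big_map; apply: eq_bigr => y _.
by rewrite /= count_map.
Qed.

Lemma all_take_g (T : Type) (P : pred T) (s : seq T) n : all P s -> all P (take n s).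
Proof. by elim: s n => [|a s IH] [|n] //= /andP[-> h]; rewrite IH. Qed.

Lemma all_drop_g (T : Type) (P : pred T) (s : seq T) n : all P s -> all P (drop n s).
Proof. by elim: s n => [|a s IH] [|n] //= /andP[_ h]; apply: IH. Qed.

Lemma set_nth_split (z : word) j a : j < size z ->
  set_nth two z j a = take j z ++ a :: drop j.+1 z.
Proof. by move=> h; rewrite set_nthE h. Qed.

Lemma wordr_down r z y : wordr r z -> y \in down r z -> wordr r y.
Proof.
move=> hz /downP [[_ ->]|[j [i [hj _ hi ->]]]].
  by rewrite /wordr /del all_cat all_take_g ?all_drop_g.
have hjz : j < size z by apply: leq_trans hj (find_size _ _).
by rewrite set_nth_split // /wordr all_cat all_take_g //= hi all_drop_g.
Qed.

Lemma sum_down r z (F : word -> nat) : \sum_(y <- down r z) F y =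
  (if has is_one z then F (del z) else 0) +
  \sum_(j <- J z) \sum_(i <- iota 0 r) F (set_nth two z j (oneL i)).
Proof.
rewrite down_eq big_cat big_allpairs_dep /=; congr (_ + _).
by case: ifP; rewrite ?big_seq1 ?big_nil.
Qed.

Lemma sum_const_iota r c : \sum_(i <- iota 0 r) c = r * c.
Proof. by rewrite big_const_seq count_predT size_iota iter_addn_0 mulnC. Qed.

Definition sl (a : letter) : letter := if a is Some _ then oneL 0 else two.

Lemma s_cat (a b : word) : s (a ++ b) = s a ++ s b.
Proof. by rewrite /s map_cat. Qed.

Lemma size_s z : size (s z) = size z.
Proof. by rewrite size_map. Qed.

Lemma is_one_sl a : is_one (sl a) = is_one a.
Proof. by case: a. Qed.

Lemma e_s z : e (s z) = e z.
Proof. by rewrite /e count_map; apply: eq_count => a; case: a. Qed.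

Lemma has_s z : has is_one (s z) = has is_one z.
Proof. by rewrite has_map; apply: eq_has => a; case: a. Qed.

Lemma find_s z : find is_one (s z) = find is_one z.
Proof. by rewrite find_map; apply: eq_find => a; case: a. Qed.

Lemma nth_s z j : nth two (s z) j = sl (nth two z j).
Proof. by elim: z j => [|a z IH] [|j] //=. Qed.

Lemma J_s z : J (s z) = J z.
Proof.
rewrite /J find_s; apply: eq_filter => j; rewrite nth_s.
by case: (nth two z j).
Qed.

Lemma del_s z : del (s z) = s (del z).
Proof. by rewrite /del find_s /s map_cat map_take map_drop. Qed.

Lemma set_nth_s z j i : s (set_nth two z j (oneL i)) = set_nth two (s z) j (oneL 0).
Proof. by elim: z j => [|a z IH] [|j] //=; [elim: j => //= j -> | rewrite IH]. Qed.

Lemma s_noones z : ~~ has is_one z -> s z = z.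
Proof. by elim: z => [|a z IH] //=; case: a => [i|] //= h; rewrite IH. Qed.

Lemma eq_s_noones z x : ~~ has is_one z -> (z == s x) = (z == x).
Proof.
move=> hz; apply/eqP/eqP => [e|<-]; last by rewrite s_noones.
have hx : ~~ has is_one x by rewrite -has_s -e.
by rewrite e s_noones.
Qed.

Lemma e0 z : (e z == 0) = ~~ has is_one z.
Proof. by rewrite has_count lt0n negbK. Qed.

Lemma size_set_nth_w (z : word) j a : j < size z -> size (set_nth two z j a) = size z.
Proof. by move=> h; rewrite size_set_nth; apply/maxn_idPr. Qed.

Lemma e_set_nth z j i : j < size z -> nth two z j = two ->
  e (set_nth two z j (oneL i)) = (e z).+1.
Proof. by move=> h hn; rewrite /e count_set_nth_ltn // hn /= addn1 subn0. Qed.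

Lemma e_del z : has is_one z -> e (del z) = (e z).-1.
Proof.
move=> hz; have hf : find is_one z < size z by rewrite -has_find.
rewrite /e /del count_cat.
have := congr1 (count is_one) (cat_take_drop (find is_one z) z).
rewrite (drop_nth two hf) count_cat /= nth_find // => <-.
by rewrite add1n addnS.
Qed.

Definition H0 (p : seq word) : bool := has (fun w => e w == 0) p.
Definition Pc r k z x := count (fun p => last [::] p == x) (paths r k z).
Definition Nc r k z x := count (fun p => (last [::] p == x) && H0 p) (paths r k z).
Definition Qc r k z x := count (fun p => (last [::] p == x) && ~~ same_end p) (paths r k z).

Lemma last_paths r k y p (a b : word) : p \in paths r k y -> last a p = last b p.
Proof. by case/paths_head => p' ->. Qed.

Lemma Pc_S r k z x : Pc r k.+1 z x = \sum_(y <- down r z) Pc r k y x.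
Proof.
rewrite /Pc count_paths_S; apply: eq_bigr => y _; apply: eq_in_count => p hp /=.
by rewrite (last_paths z [::] hp).
Qed.

Lemma Nc_S r k z x : has is_one z -> Nc r k.+1 z x = \sum_(y <- down r z) Nc r k y x.
Proof.
move=> hz; rewrite /Nc count_paths_S; apply: eq_bigr => y _; apply: eq_in_count => p hp /=.
by rewrite (last_paths z [::] hp) /H0 /= e0 hz.
Qed.

Lemma Nc_noones r k z x : ~~ has is_one z -> Nc r k z x = Pc r k z x.
Proof.
move=> hz; rewrite /Nc /Pc; apply: eq_in_count => p /paths_head [p' ->].
by rewrite /H0 /= e0 hz andbT.
Qed.

Lemma count_split (T : Type) (P Q : pred T) s :
  count P s = count (fun x => P x && Q x) s + count (fun x => P x && ~~ Q x) s.
Proof.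
elim: s => //= a s ->; case: (P a); case: (Q a) => /=; lia.
Qed.

Lemma count_const_and (T : Type) (c : bool) (P : pred T) s :
  count (fun x => c && P x) s = c * count P s.
Proof. by case: c => /=; rewrite ?mul1n ?mul0n // count_pred0. Qed.

Lemma cat_eq_split (a u x : word) :
  (a ++ u == x) = (x == take (size x - size u) x ++ u) && (a == take (size x - size u) x).
Proof.
apply/eqP/andP => [<-|[/eqP hx /eqP ->]]; last by rewrite -hx.
by rewrite size_cat addnK take_size_cat.
Qed.

Lemma count_paths_nil r k y (F : pred (seq word)) :
  (forall p, F (y :: p) = false) -> count F (paths r k y) = 0.
Proof.
move=> hF; rewrite (eq_in_count (a2 := pred0)) ?count_pred0 //.
by move=> p /paths_head [p' ->]; rewrite hF.
Qed.

Lemma suffix_paths r u k B (F : pred (seq word)) :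
  count (fun p => all (suffix u) p && F p) (paths r k (B ++ u)) =
  count (fun p => F (map (cat^~ u) p)) (paths r k B).
Proof.
elim: k B F => [|k IH] B F.
  by rewrite /paths /= suffix_suffix.
rewrite !count_paths_S.
have hperm : perm_eq [seq y <- down r (B ++ u) | suffix u y] (map (cat^~ u) (down r B)).
  apply: uniq_perm.
  - by rewrite filter_uniq // down_uniq.
  - by rewrite map_inj_uniq ?down_uniq // => a b; apply: catIs_w.
  move=> y; rewrite mem_filter; apply/andP/mapP => [[/suffixP [y' ->] hy]|[B' hB' ->]].
    by exists y'; rewrite // -(down_catU r B u).
  by rewrite suffix_suffix down_catr.
rewrite (bigID (suffix u)) /= [X in _ + X = _]big1 ?addn0; last first.
  move=> y hy; apply: count_paths_nil => p /=.
  by rewrite (negbTE hy) andbF.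
rewrite -big_filter (perm_big _ hperm) big_map; apply: eq_bigr => B' _.
rewrite -(IH B' (fun p => F ((B ++ u) :: p))); apply: eq_count => p /=.
by rewrite suffix_suffix.
Qed.

Lemma last_one_split z : has is_one z ->
  exists B i T, z = B ++ oneL i :: T /\ ~~ has is_one T.
Proof.
elim: z => [|a z IH] //= h.
case hz: (has is_one z).
  by case: (IH hz) => B [i [T [-> hT]]]; exists (a :: B), i, T.
case: a h => [i|] /=; last by rewrite hz.
by move=> _; exists [::], i, z; rewrite hz.
Qed.

Lemma noH0_suffix r i T k : ~~ has is_one T -> forall B p,
  p \in paths r k (B ++ oneL i :: T) -> ~~ H0 p -> all (suffix (oneL i :: T)) p.
Proof.
move=> hT; elim: k => [|k IH] B p.
  by rewrite /paths /= inE => /eqP -> _ /=; rewrite suffix_suffix.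
rewrite paths_S => /allpairsPdep [y [p' [hy hp' ->]]].
rewrite /H0 /= negb_or => /andP[_ hp0]; rewrite suffix_suffix /=.
case/paths_head: (hp') => p'' ep.
have hy0 : e y != 0 by move: hp0; rewrite ep /H0 /= negb_or => /andP[].
case/down_cat: hy => [[B' hB' ey]|[hB [[_ ey]|[j [i' [hj _ _ _]]]]]].
- by apply: (IH B'); rewrite -?ey.
- move: hy0; rewrite ey /e count_cat /del /=.
  rewrite (_ : count is_one B = 0); last by apply/eqP; rewrite e0.
  by rewrite drop0 /= add0n; move: hT; rewrite has_count lt0n negbK => /eqP ->.
- by [].
Qed.

Lemma Pc_split r k z x : Pc r k z x =
  Nc r k z x + count (fun p => (last [::] p == x) && ~~ H0 p) (paths r k z).
Proof. by rewrite /Pc /Nc (count_split _ H0). Qed.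

Lemma e_cat (a b : word) : e (a ++ b) = e a + e b.
Proof. by rewrite /e count_cat. Qed.

Lemma survivor r i T k B x : ~~ has is_one T ->
  count (fun p => (last [::] p == x) && ~~ H0 p) (paths r k (B ++ oneL i :: T)) =
  (x == take (size x - (size T).+1) x ++ oneL i :: T) * Pc r k B (take (size x - (size T).+1) x).
Proof.
move=> hT.
rewrite (eq_in_count (a2 := fun p => all (suffix (oneL i :: T)) p && ((last [::] p == x) && ~~ H0 p))); last first.
  move=> p hp /=; case h0: (H0 p); rewrite ?andbF //= !andbT.
  by rewrite (noH0_suffix hT hp) ?h0.
rewrite suffix_paths /Pc -count_const_and; apply: eq_in_count => p hp.
have -> : H0 (map (cat^~ (oneL i :: T)) p) = false.
  apply/hasPn => w /mapP [w' _ ->]; by rewrite e_cat /e /= add1n addnS.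
rewrite andbT; case/paths_head: hp => p' -> /=.
by rewrite (last_map (cat^~ (oneL i :: T))) cat_eq_split.
Qed.

Lemma sum_bool (P : pred nat) s : \sum_(i <- s) (P i : nat) = count P s.
Proof. by elim: s => [|a s IH]; rewrite ?big_nil ?big_cons ?IH. Qed.

Lemma ind_sum r x T : wordr r x -> ~~ has is_one T ->
  \sum_(i <- iota 0 r) (x == take (size x - (size T).+1) x ++ oneL i :: T : nat) =
  (s x == s (take (size x - (size T).+1) x) ++ oneL 0 :: T).
Proof.
move=> hx hT; set X := take _ x; set D := drop (size x - (size T).+1) x.
have ex : x = X ++ D by rewrite cat_take_drop.
have h1 : forall i, (x == X ++ oneL i :: T) = (D == oneL i :: T).
  by move=> i; rewrite {1}ex eqseq_cat // eqxx.
have h2 : (s x == s X ++ oneL 0 :: T) = (s D == oneL 0 :: T).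
  by rewrite {1}ex s_cat eqseq_cat ?size_s // eqxx.
rewrite h2; under eq_bigr => i _ do rewrite h1.
have hD : all (fun a => if a is Some i then i < r else true) D by apply: all_drop_g.
case: D hD {ex h1 h2} => [|a D'] /=.
  by move=> _; rewrite big1.
move=> /andP[ha _].
have hD' : (s D' == T) = (D' == T) by rewrite eq_sym eq_s_noones // eq_sym.
rewrite eqseq_cons hD'; under eq_bigr => i _ do rewrite eqseq_cons.
case: (D' == T); last by rewrite andbF big1 // => i _; rewrite andbF.
rewrite andbT; under eq_bigr => i _ do rewrite andbT.
case: a ha => [i0|] ha /=; last by rewrite big1.
rewrite sum_bool.
rewrite (eq_count (a2 := pred1 i0)); last by move=> i; rewrite /= eq_sym.
by rewrite count_uniq_mem ?iota_uniq // mem_iota ha.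
Qed.

Lemma wordr_noones r z : ~~ has is_one z -> wordr r z.
Proof. by elim: z => [|a z IH] //=; case: a => [i|] //= h; rewrite IH. Qed.

Lemma J_facts z j : j \in J z -> [/\ j < size z, j < find is_one z & nth two z j = two].
Proof.
rewrite mem_filter mem_iota => /andP[/eqP hn /andP[_ hj]]; split=> //.
exact: leq_trans hj (find_size _ _).
Qed.

Lemma wordr_cat r (a b : word) : wordr r (a ++ b) = wordr r a && wordr r b.
Proof. exact: all_cat. Qed.

Lemma take_s n x : take n (s x) = s (take n x).
Proof. by rewrite /s map_take. Qed.

Lemma iota01 : iota 0 1 = [:: 0]. Proof. by []. Qed.

Lemma main_ind r k : 0 < r ->
  (forall z x, wordr r z -> wordr r x ->
     Nc r k z x * r ^ (size x + e z) = r ^ size z * Nc 1 k (s z) (s x)) /\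
  (forall z x, ~~ has is_one z -> wordr r x ->
     Pc r k z x * r ^ size x = r ^ size z * Pc 1 k z (s x)).
Proof.
move=> hr; elim: k => [|k [IH1 IH2]].
  split.
  - move=> z x _ _; rewrite /Nc /paths /= !addn0 /H0 /= !orbF e_s.
    case hz: (e z == 0); last by rewrite !andbF muln0 mul0n.
    rewrite !andbT (eqP hz) addn0; rewrite e0 in hz.
    rewrite (s_noones hz) eq_s_noones //.
    by case: eqP => [->|_]; rewrite ?mul1n ?muln1 ?mul0n ?muln0.
  - move=> z x hz _; rewrite /Pc /paths /= !addn0 eq_s_noones //.
    by case: eqP => [->|_]; rewrite ?mul1n ?muln1 ?mul0n ?muln0.
have C2 : forall z x, ~~ has is_one z -> wordr r x ->
    Pc r k.+1 z x * r ^ size x = r ^ size z * Pc 1 k.+1 z (s x).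
  move=> z x hz hx.
  rewrite !Pc_S !sum_down (negbTE hz) !add0n big_distrl big_distrr /=.
  apply: eq_big_seq => j /J_facts [hjz _ _].
  rewrite ?iota01 big_seq1.
  set B := take j z; set T := drop j.+1 z.
  have hB : ~~ has is_one B.
    by move: hz; rewrite -(cat_take_drop j z) has_cat negb_or => /andP[].
  have hT : ~~ has is_one T.
    by move: hz; rewrite -(cat_take_drop j.+1 z) has_cat negb_or => /andP[].
  have hsz : size z = size B + (size T).+1.
    by rewrite /B /T size_take size_drop hjz; lia.
  under eq_bigr => i _ do rewrite set_nth_split // -/B -/T Pc_split survivor //.
  rewrite set_nth_split // -/B -/T (Pc_split 1) survivor //.
  rewrite big_split /= mulnDl mulnDr; congr (_ + _).
  - apply/eqP; rewrite -(eqn_pmul2l hr); apply/eqP.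
    rewrite mulnCA -expnS big_distrl /=.
    rewrite (eq_big_seq (fun i => r ^ size z * Nc 1 k (B ++ oneL 0 :: T) (s x))).
      by rewrite sum_const_iota.
    move=> i; rewrite mem_iota add0n => /andP[_ hi].
    have hw : wordr r (B ++ oneL i :: T).
      by rewrite wordr_cat wordr_noones //= hi; apply: wordr_noones.
    have := IH1 _ _ hw hx.
    rewrite e_cat /e /= (eqP (_ : count is_one B == 0)) ?e0 //.
    rewrite (eqP (_ : count is_one T == 0)) ?e0 // addn1 => ->.
    rewrite size_cat /= -hsz s_cat s_noones //= s_noones //.
  - rewrite -big_distrl /= ind_sum //.
    rewrite size_s !take_s.
    case hsx: (s x == _); rewrite ?mul0n ?muln0 // !mul1n.
    have hsx' : size x = size (take (size x - (size T).+1) x) + (size T).+1.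
      by move: hsx => /eqP/(congr1 size); rewrite size_cat !size_s.
    rewrite {2}hsx' expnD mulnA IH2 //; last by rewrite /wordr all_take_g.
    by rewrite -take_s -mulnA mulnC -mulnA -expnD addnC -hsz mulnC.
split=> //.
move=> z x hz hx; case hz1: (has is_one z); last first.
  rewrite !Nc_noones ?has_s ?hz1 //.
  have -> : e z = 0 by apply/eqP; rewrite e0 hz1.
  by rewrite addn0 s_noones ?hz1 // C2 ?hz1.
rewrite !Nc_S ?has_s // !sum_down has_s hz1 J_s del_s.
rewrite mulnDl mulnDr big_distrl big_distrr /=; congr (_ + _).
  have he : 0 < e z by rewrite -has_count.
  have hs0 : 0 < size z by move: hz1; rewrite has_find; lia.
  have hw : wordr r (del z) by apply: (wordr_down hz); apply/downP; left.
  have := IH1 _ _ hw hx; rewrite e_del // size_del // => h.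
  by rewrite -(prednK he) addnS expnS -(prednK hs0) expnS mulnCA h mulnA.
apply: eq_big_seq => j /J_facts [hjz hjf hn].
rewrite ?iota01 big_seq1.
apply/eqP; rewrite -(eqn_pmul2l hr); apply/eqP.
rewrite mulnCA -expnS big_distrl /=.
rewrite (eq_big_seq (fun i => r ^ size z * Nc 1 k (set_nth two (s z) j (oneL 0)) (s x))).
  by rewrite sum_const_iota.
move=> i; rewrite mem_iota add0n => /andP[_ hi].
have hw : wordr r (set_nth two z j (oneL i)).
  by apply: (wordr_down hz); apply/downP; right; exists j, i.
have := IH1 _ _ hw hx.
by rewrite e_set_nth // size_set_nth_w // set_nth_s addnS.
Qed.

Lemma H0_same_end r k z p : p \in paths r k z -> ~~ H0 p -> same_end p.
Proof.
move=> hp h0; case hz: (has is_one z); last first.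
  by case/paths_head: hp h0 => p' ->; rewrite /H0 /= e0 hz.
case: (last_one_split hz) => B [i [T [ez hT]]].
have hp' : p \in paths r k (B ++ oneL i :: T) by rewrite -ez.
have hall := noH0_suffix hT hp' h0.
case/paths_head: hp hall => p' -> hall /=.
have hz0 : z != [::] by rewrite ez -size_eq0 size_cat /= addnS.
have key : forall w, w \in z :: p' -> ends_with (last two z) w.
  move=> w hw; have /suffixP [w' ->] := allP hall w hw.
  rewrite /ends_with ez !last_cat /=; apply/andP; split=> //; by case: w' {hw}.
rewrite hz0 /= key ?mem_head //=; apply/allP => w hw; apply: key.
by rewrite inE hw orbT.
Qed.

Definition E r k z x := count (fun p => (last [::] p == x) && H0 p && same_end p) (paths r k z).

Lemma Nc_QE r k z x : Nc r k z x = Qc r k z x + E r k z x.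
Proof.
rewrite /Nc (count_split _ same_end) addnC /E; congr (_ + _).
apply: eq_in_count => p hp /=.
case hs: (same_end p); rewrite ?andbF //= !andbT.
case h0: (H0 p); rewrite ?andbT //.
by move/negbT: h0 => /(H0_same_end hp); rewrite hs.
Qed.

Lemma E_nil r k x : E r k [::] x = 0.
Proof. by apply: count_paths_nil => p /=; rewrite andbF. Qed.

Lemma ends_one_noH0 i q : all (ends_with (oneL i)) q -> H0 q = false.
Proof.
move=> h; apply/hasPn => w hw; have := allP h w hw.
rewrite /ends_with => /andP[hw0 /eqP hl]; rewrite e0 negbK; apply/hasP.
exists (last two w); last by rewrite hl.
by case: w hw0 hl {hw} => // a w _ _ /=; exact: mem_last.
Qed.

Lemma E_one r k Z i x : E r k (rcons Z (oneL i)) x = 0.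
Proof.
apply: count_paths_nil => p.
rewrite /same_end last_rcons; case hs: (all _ _); last by rewrite !andbF.
by rewrite (ends_one_noH0 hs) andbF.
Qed.

Lemma ends_two w : ends_with two w = suffix [:: two] w.
Proof.
case/lastP: w => [|w a] //; rewrite /ends_with last_rcons.
have -> : (rcons w a != [::]) = true by case: w.
rewrite -cats1 -[[:: two]]/([::] ++ [:: two]) suffix_catl // suffix0s andbT /=.
by rewrite eqseq_cons andbT eq_sym.
Qed.

Lemma E_two r k Z x : E r k (rcons Z two) x =
  (x == take (size x - 1) x ++ [:: two]) * Nc r k Z (take (size x - 1) x).
Proof.
rewrite /E -cats1.
rewrite (eq_in_count (a2 := fun p => all (suffix [:: two]) p && ((last [::] p == x) && H0 p))); last first.
  move=> p /paths_head [p' ep]; rewrite ep.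
  have hz0 : (Z ++ [:: two] != [::]) by rewrite cats1; case Z.
  have hl : last two (Z ++ [:: two]) = two by rewrite cats1 last_rcons.
  have hse : same_end ((Z ++ [:: two]) :: p') = all (suffix [:: two]) ((Z ++ [:: two]) :: p').
    change (((Z ++ [:: two]) != [::]) && all (ends_with (last two (Z ++ [:: two]))) ((Z ++ [:: two]) :: p') = all (suffix [:: two]) ((Z ++ [:: two]) :: p')).
    by rewrite hz0 hl (eq_all ends_two).
  by rewrite hse andbC.
rewrite suffix_paths /Nc -count_const_and; apply: eq_in_count => p hp.
have -> : H0 (map (cat^~ [:: two]) p) = H0 p.
  by rewrite /H0 has_map; apply: eq_has => w /=; rewrite e_cat /e /= !addn0.
case/paths_head: hp => p' -> /=.
by rewrite (last_map (cat^~ [:: two])) cat_eq_split andbA.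
Qed.

Lemma ind_two x : (x == take (size x - 1) x ++ [:: two]) =
  (s x == s (take (size x - 1) x) ++ [:: two]).
Proof.
set X := take _ x; set D := drop (size x - 1) x.
have ex : x = X ++ D by rewrite cat_take_drop.
rewrite {1}ex eqseq_cat // eqxx {1}ex s_cat eqseq_cat ?size_s // eqxx /=.
by rewrite eq_sym -eq_s_noones // eq_sym.
Qed.

Lemma Q_formula r k z x : 0 < r -> wordr r z -> wordr r x ->
  Qc r k z x * r ^ (size x + e z) = r ^ size z * Qc 1 k (s z) (s x).
Proof.
move=> hr hz hx; have [C1 _] := main_ind k hr.
have hN := C1 z x hz hx; rewrite !Nc_QE mulnDl mulnDr in hN.
suff hE : E r k z x * r ^ (size x + e z) = r ^ size z * E 1 k (s z) (s x).
  by rewrite hE in hN; apply: (addIn hN).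
case/lastP: z hz {hN} => [|Z a] hz.
  by rewrite !E_nil mul0n muln0.
rewrite /s map_rcons -/(s Z).
case: a hz => [i|] hz.
  by rewrite (E_one r) (E_one 1) mul0n muln0.
rewrite !E_two size_s take_s -ind_two.
case hxi: (x == _); rewrite ?mul0n ?muln0 // !mul1n.
have hsx : size x = size (take (size x - 1) x) + 1.
  by move/eqP: hxi => /(congr1 size); rewrite size_cat.
have hZ : wordr r Z by move: hz; rewrite -cats1 wordr_cat => /andP[].
have := C1 Z _ hZ (all_take_g (size x - 1) hx).
rewrite -cats1 e_cat size_cat /= => h.
by rewrite !addn0 [in r ^ (size x + _)]hsx addnAC expnD mulnA h expnD mulnAC.
Qed.

Lemma lcp_size a b : lcp a b <= minn (size a) (size b).
Proof.
elim: a b => [|x a IH] [|y b] //=; case: eqP => // _.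
by rewrite minnSS ltnS IH.
Qed.

Lemma d_eq r w v l :
  d r w v l = Qc r (weight (cut v l) - weight (cut w l)) (cut v l) (cut w l).
Proof.
rewrite /d /Qc -size_filter.
set P := fun p => _.
set L := pathsk _ _ _ _.
have hp : perm_eq (undup [seq p <- L | P p])
    [seq p <- paths r (weight (cut v l) - weight (cut w l)) (cut v l) | P p].
  apply: uniq_perm; first exact: undup_uniq.
    by rewrite filter_uniq // paths_uniq.
  by move=> p; rewrite mem_undup !mem_filter pathsk_mem.
rewrite (perm_size hp) !size_filter; apply: eq_in_count => p hp'.
by rewrite /P (last_paths _ [::] hp').
Qed.

Lemma weight_s z : weight (s z) = weight z.
Proof. by rewrite /weight /s -map_comp; congr sumn; apply: eq_map => a; case: a. Qed.

Lemma cut_s z l : cut (s z) l = s (cut z l).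
Proof. by rewrite /cut size_s take_s. Qed.

Local Open Scope ring_scope.

Theorem mainTheorem5 (r : nat) (w v : word) (l : nat) :
  (0 < r)%N -> wordr r w -> wordr r v -> (l <= h w v)%N ->
  ((d r w v l)%:R : rat) =
    (d 1 (s w) (s v) l)%:R *
    (r%:R : rat) ^ ((nletters v)%:Z - (nletters w)%:Z - (e (cut v l))%:Z).
Proof.
move=> hr hw hv hl.
have hls := leq_trans hl (lcp_size _ _).
have hlw : (l <= size w)%N by move: hls; rewrite !size_rev leq_min => /andP[].
have hlv : (l <= size v)%N by move: hls; rewrite !size_rev leq_min => /andP[].
rewrite !d_eq !cut_s !weight_s.
set k := (_ - _)%N.
have hQ := @Q_formula r k (cut v l) (cut w l) hr (all_take_g _ hv) (all_take_g _ hw).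
have hsv : size (cut v l) = (size v - l)%N by rewrite /cut size_take; case: ltnP => //; lia.
have hsw : size (cut w l) = (size w - l)%N by rewrite /cut size_take; case: ltnP => //; lia.
rewrite /nletters.
have -> : (size v)%:Z - (size w)%:Z - (e (cut v l))%:Z =
    (size (cut v l))%:Z - (size (cut w l) + e (cut v l))%N%:Z.
  by rewrite hsv hsw; lia.
have hr0 : (r%:R : rat) != 0 by rewrite pnatr_eq0 -lt0n.
rewrite expfzDr // -exprnN -!exprnP.
set a := size (cut v l); set b := (size (cut w l) + e (cut v l))%N.
have hb : (r%:R : rat) ^+ b != 0 by rewrite expf_neq0.
apply: (mulIf hb); rewrite -!mulrA mulVf // mulr1.
have := congr1 (fun n : nat => (n%:R : rat)) hQ; rewrite /= !natrM !natrX => ->.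
by rewrite mulrC.
Qed.
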